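(* Fix $\lambda_1,\lambda_2,\lambda_3\in\mathbb{Z}_{\ge0}$. Let $\mathbf{w}=[w_1,w_2,\dots]$ be an infinite reduced sequence and $\{k_j\}_{j\ge1}$ its ratio number sequence. Then: (1) if each of $1,2,3$ appears infinitely many times in $\mathbf{w}$, then $\lim_{j\to\infty}k_j=3+\lambda_1+\lambda_2+\lambda_3$; (2) if some index $i\in\{1,2,3\}$ appears only finitely many times in $\mathbf{w}$, then there exists a real number $k_\beta$ with $\lim_{j\to\infty}k_j=k_\beta$.
   Context: Generalized Markov mutations (for the equation $X_1^2+X_2^2+X_3^2+\lambda_3X_1X_2+\lambda_1X_2X_3+\lambda_2X_3X_1=(3+\lambda_1+\lambda_2+\lambda_3)X_1X_2X_3$) are the maps on positive rational triples $\mu_1(x_1,x_2,x_3)=(\frac{x_2^2+\lambda_1x_2x_3+x_3^2}{x_1},x_2,x_3)$, $\mu_2(x_1,x_2,x_3)=(x_1,\frac{x_1^2+\lambda_2x_1x_3+x_3^2}{x_2},x_3)$, $\mu_3(x_1,x_2,x_3)=(x_1,x_2,\frac{x_1^2+\lambda_3x_1x_2+x_2^2}{x_3})$. A sequence $\mathbf{w}=[w_1,w_2,\dots]$ with entries in $\{1,2,3\}$ is reduced if $w_i\ne w_{i+1}$ for all $i$. Ratio number sequence: set $T_0=(1,1,1)$ and $T_j=\mu_{w_j}(T_{j-1})$ for $j\ge1$; $k_j$ is the $w_j$-th component of $T_j$ divided by the product of the other two components of $T_j$. *)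

(* Defs.v *)
From HB Require Import structures.
From mathcomp Require Import all_boot all_order all_algebra.
From mathcomp Require Import all_classical all_reals all_analysis.
Set Implicit Arguments. Unset Strict Implicit. Unset Printing Implicit Defensive.
Import Order.TTheory GRing.Theory Num.Theory.
Local Open Scope ring_scope.

Definition triple := (rat * rat * rat)%type.
Definition t1 (t : triple) : rat := t.1.1.
Definition t2 (t : triple) : rat := t.1.2.
Definition t3 (t : triple) : rat := t.2.

Definition mu (l1 l2 l3 : nat) (i : nat) (t : triple) : triple :=
  let x1 := t1 t in let x2 := t2 t in let x3 := t3 t in
  match i with
  | 1%N => ((x2 ^+ 2 + l1%:R * x2 * x3 + x3 ^+ 2) / x1, x2, x3)
  | 2%N => (x1, (x1 ^+ 2 + l2%:R * x1 * x3 + x3 ^+ 2) / x2, x3)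
  | 3%N => (x1, x2, (x1 ^+ 2 + l3%:R * x1 * x2 + x2 ^+ 2) / x3)
  | _ => t
  end.

(* T_0 = (1,1,1), T_j = mu_{w_j} (T_{j-1}); w is indexed from 1 (w 0 unused) *)
Fixpoint Tseq (l1 l2 l3 : nat) (w : nat -> nat) (j : nat) : triple :=
  match j with
  | 0%N => (1, 1, 1)
  | j'.+1 => mu l1 l2 l3 (w j) (Tseq l1 l2 l3 w j')
  end.

Definition kseq (l1 l2 l3 : nat) (w : nat -> nat) (j : nat) : rat :=
  let t := Tseq l1 l2 l3 w j in
  match w j with
  | 1%N => t1 t / (t2 t * t3 t)
  | 2%N => t2 t / (t1 t * t3 t)
  | _ => t3 t / (t1 t * t2 t)
  end.

Definition reduced_seq (w : nat -> nat) : Prop :=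
  (forall j, (1 <= j)%N -> (1 <= w j <= 3)%N) /\
  (forall j, (1 <= j)%N -> w j != w j.+1).

Definition appears_infinitely (w : nat -> nat) (i : nat) : Prop :=
  forall N, exists j, (N <= j)%N /\ w j = i.

(* Main.v *)
Require Import Defs.
From HB Require Import structures.
From mathcomp Require Import all_boot all_order all_algebra.
From mathcomp Require Import all_classical all_reals all_analysis.
From mathcomp Require Import ring lra.
Import Order.TTheory GRing.Theory Num.Theory.
Import numFieldNormedType.Exports.
Local Open Scope classical_set_scope.
Local Open Scope ring_scope.


Definition sel (t : triple) (i : nat) : rat :=
  match i with 1%N => t1 t | 2%N => t2 t | _ => t3 t end.
Definition oth (t : triple) (i : nat) : rat :=
  match i with 1%N => t2 t * t3 t | 2%N => t1 t * t3 t | _ => t1 t * t2 t end.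
Definition Kq (l1 l2 l3 : nat) : rat := (3 + l1 + l2 + l3)%N%:R.
Definition Fd (l1 l2 l3 : nat) (t : triple) : rat :=
  t1 t ^+ 2 + t2 t ^+ 2 + t3 t ^+ 2 + l3%:R * t1 t * t2 t + l1%:R * t2 t * t3 t
  + l2%:R * t3 t * t1 t - Kq l1 l2 l3 * (t1 t * t2 t * t3 t).
Definition tpos (t : triple) := 0 < t1 t /\ 0 < t2 t /\ 0 < t3 t.

Lemma num_pos (a b l : rat) : 0 < a -> 0 < b -> 0 <= l -> 0 < a ^+ 2 + l * a * b + b ^+ 2.
Proof.
move=> ha hb hl; have := mulr_ge0 (mulr_ge0 hl (ltW ha)) (ltW hb).
have := exprn_gt0 2 ha; have := exprn_gt0 2 hb; lra.
Qed.

Lemma mu_pos l1 l2 l3 i t : tpos t -> tpos (mu l1 l2 l3 i t).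
Proof.
case=> h1 [h2 h3]; case: i => [|[|[|[|i]]]] //=;
  rewrite /tpos /t1 /t2 /t3 /= -/(t1 t) -/(t2 t) -/(t3 t); split=> //; try split => //;
  by apply: divr_gt0 => //; apply: num_pos.
Qed.

Lemma T_pos l1 l2 l3 w j : tpos (Tseq l1 l2 l3 w j).
Proof.
elim: j => [|j IH] /=; first by rewrite /tpos /t1 /t2 /t3 /= ltr01.
exact: mu_pos.
Qed.

Lemma sel_pos t i : tpos t -> 0 < sel t i.
Proof. by case=> h1 [h2 h3]; case: i => [|[|[|i]]]. Qed.
Lemma oth_pos t i : tpos t -> 0 < oth t i.
Proof. by case=> h1 [h2 h3]; case: i => [|[|[|i]]] /=; rewrite mulr_gt0. Qed.

Lemma mu_Fd l1 l2 l3 i t : tpos t -> Fd l1 l2 l3 t = 0 -> Fd l1 l2 l3 (mu l1 l2 l3 i t) = 0.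
Proof.
case=> h1 [h2 h3] hF.
have a0 : t1 t != 0 by rewrite gt_eqF.
have b0 : t2 t != 0 by rewrite gt_eqF.
have c0 : t3 t != 0 by rewrite gt_eqF.
case: i => [|[|[|[|i]]]] //=.
- have -> : Fd l1 l2 l3 (mu l1 l2 l3 1 t) =
     (t2 t ^+ 2 + l1%:R * t2 t * t3 t + t3 t ^+ 2) / t1 t ^+ 2 * Fd l1 l2 l3 t.
    by rewrite /Fd /mu /t1 /t2 /t3 /= -/(t1 t) -/(t2 t) -/(t3 t); field; rewrite ?a0 ?b0 ?c0.
  by rewrite hF mulr0.
- have -> : Fd l1 l2 l3 (mu l1 l2 l3 2 t) =
     (t1 t ^+ 2 + l2%:R * t1 t * t3 t + t3 t ^+ 2) / t2 t ^+ 2 * Fd l1 l2 l3 t.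
    by rewrite /Fd /mu /t1 /t2 /t3 /= -/(t1 t) -/(t2 t) -/(t3 t); field; rewrite ?a0 ?b0 ?c0.
  by rewrite hF mulr0.
- have -> : Fd l1 l2 l3 (mu l1 l2 l3 3 t) =
     (t1 t ^+ 2 + l3%:R * t1 t * t2 t + t2 t ^+ 2) / t3 t ^+ 2 * Fd l1 l2 l3 t.
    by rewrite /Fd /mu /t1 /t2 /t3 /= -/(t1 t) -/(t2 t) -/(t3 t); field; rewrite ?a0 ?b0 ?c0.
  by rewrite hF mulr0.
Qed.

Lemma T_Fd l1 l2 l3 w j : Fd l1 l2 l3 (Tseq l1 l2 l3 w j) = 0.
Proof.
elim: j => [|j IH] /=.
  by rewrite /Fd /Kq /t1 /t2 /t3 /= !natrD; ring.
by apply: mu_Fd => //; apply: T_pos.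
Qed.

Lemma kdef l1 l2 l3 w j :
  kseq l1 l2 l3 w j = sel (Tseq l1 l2 l3 w j) (w j) / oth (Tseq l1 l2 l3 w j) (w j).
Proof. by rewrite /kseq; case: (w j) => [|[|[|n]]]. Qed.

Lemma mono_gen (a b c l y k0 k1 : rat) : 0 < a -> 0 < b -> 0 < c -> 0 <= l ->
  y * b = a^+2 + l*a*c + c^+2 -> k0 = a/(b*c) -> k1 = y/(a*c) -> k0 <= k1.
Proof.
move=> ha hb hc hl hy -> ->.
have a0 : a != 0 by rewrite gt_eqF.
have b0 : b != 0 by rewrite gt_eqF.
have c0 : c != 0 by rewrite gt_eqF.
have -> : a/(b*c) = a^+2 / (a*b*c) by field; rewrite ?a0 ?b0 ?c0.
have -> : y/(a*c) = (y*b)/(a*b*c) by field; rewrite ?a0 ?b0 ?c0.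
rewrite ler_pM2r ?invr_gt0 ?mulr_gt0 // hy.
have := mulr_ge0 (mulr_ge0 hl (ltW ha)) (ltW hc).
have := exprn_gt0 2 hc.
lra.
Qed.

Lemma mono_step l1 l2 l3 t a i : tpos t -> (1 <= a <= 3)%N -> (1 <= i <= 3)%N -> a != i ->
  sel t a / oth t a <= sel (mu l1 l2 l3 i t) i / oth (mu l1 l2 l3 i t) i.
Proof.
case=> h1 [h2 h3].
have a0 : t1 t != 0 by rewrite gt_eqF.
have b0 : t2 t != 0 by rewrite gt_eqF.
have c0 : t3 t != 0 by rewrite gt_eqF.
case: a => [|[|[|[|a]]]] //; case: i => [|[|[|[|i]]]] //= _ _ _;
 rewrite /t1 /t2 /t3 /= -/(t1 t) -/(t2 t) -/(t3 t).
- apply: (@mono_gen (t1 t) (t2 t) (t3 t) l2%:R ((t1 t ^+ 2 + l2%:R * t1 t * t3 t + t3 t ^+ 2) / t2 t)) => //;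
  solve [rewrite divfK //; ring | field; rewrite ?a0 ?b0 ?c0 //].
- apply: (@mono_gen (t1 t) (t3 t) (t2 t) l3%:R ((t1 t ^+ 2 + l3%:R * t1 t * t2 t + t2 t ^+ 2) / t3 t)) => //;
  solve [rewrite divfK //; ring | field; rewrite ?a0 ?b0 ?c0 //].
- apply: (@mono_gen (t2 t) (t1 t) (t3 t) l1%:R ((t2 t ^+ 2 + l1%:R * t2 t * t3 t + t3 t ^+ 2) / t1 t)) => //;
  solve [rewrite divfK //; ring | field; rewrite ?a0 ?b0 ?c0 //].
- apply: (@mono_gen (t2 t) (t3 t) (t1 t) l3%:R ((t1 t ^+ 2 + l3%:R * t1 t * t2 t + t2 t ^+ 2) / t3 t)) => //;
  solve [rewrite divfK //; ring | field; rewrite ?a0 ?b0 ?c0 //].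
- apply: (@mono_gen (t3 t) (t1 t) (t2 t) l1%:R ((t2 t ^+ 2 + l1%:R * t2 t * t3 t + t3 t ^+ 2) / t1 t)) => //;
  solve [rewrite divfK //; ring | field; rewrite ?a0 ?b0 ?c0 //].
- apply: (@mono_gen (t3 t) (t2 t) (t1 t) l2%:R ((t1 t ^+ 2 + l2%:R * t1 t * t3 t + t3 t ^+ 2) / t2 t)) => //;
  solve [rewrite divfK //; ring | field; rewrite ?a0 ?b0 ?c0 //].
Qed.

Lemma bndK (x y z p q r K k : rat) : 0 < x -> 0 < y -> 0 < z -> 0 <= p -> 0 <= q -> 0 <= r ->
  x^+2 + y^+2 + z^+2 + p*x*y + q*y*z + r*z*x - K*(x*y*z) = 0 ->
  k = x/(y*z) -> k <= K.
Proof.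
move=> hx hy hz hp hq hr hF ->.
have x0 : x != 0 by rewrite gt_eqF.
have y0 : y != 0 by rewrite gt_eqF.
have z0 : z != 0 by rewrite gt_eqF.
have hK : K = (x^+2 + y^+2 + z^+2 + p*x*y + q*y*z + r*z*x) / (x*y*z).
  have hK' : K*(x*y*z) = x^+2 + y^+2 + z^+2 + p*x*y + q*y*z + r*z*x by lra.
  by rewrite -hK' mulfK // !mulf_neq0.
have -> : x/(y*z) = x^+2/(x*y*z) by field; rewrite ?x0 ?y0 ?z0 //.
rewrite hK ler_pM2r ?invr_gt0 ?mulr_gt0 //.
have := mulr_ge0 (mulr_ge0 hp (ltW hx)) (ltW hy).
have := mulr_ge0 (mulr_ge0 hq (ltW hy)) (ltW hz).
have := mulr_ge0 (mulr_ge0 hr (ltW hz)) (ltW hx).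
have := exprn_gt0 2 hy; have := exprn_gt0 2 hz.
lra.
Qed.

Lemma bndL (x y z p q r K k n : rat) : 0 < n -> n <= x -> n <= y -> n <= z ->
  y <= x -> z <= x -> 0 <= p -> 0 <= q -> 0 <= r ->
  x^+2 + y^+2 + z^+2 + p*x*y + q*y*z + r*z*x - K*(x*y*z) = 0 ->
  k = x/(y*z) -> K - k <= (2 + p + q + r) / n.
Proof.
move=> hn hnx hny hnz hyx hzx hp hq hr hF ->.
have hx : 0 < x by apply: lt_le_trans hnx.
have hy : 0 < y by apply: lt_le_trans hny.
have hz : 0 < z by apply: lt_le_trans hnz.
have x0 : x != 0 by rewrite gt_eqF.
have y0 : y != 0 by rewrite gt_eqF.
have z0 : z != 0 by rewrite gt_eqF.
have hK : K = (x^+2 + y^+2 + z^+2 + p*x*y + q*y*z + r*z*x) / (x*y*z).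
  have hK' : K*(x*y*z) = x^+2 + y^+2 + z^+2 + p*x*y + q*y*z + r*z*x by lra.
  by rewrite -hK' mulfK // !mulf_neq0.
have -> : K - x/(y*z) = (y^+2 + z^+2 + p*x*y + q*y*z + r*z*x)/(x*y*z).
  by rewrite hK; field; rewrite ?x0 ?y0 ?z0 //.
rewrite ler_pdivrMr ?mulr_gt0 // [X in _ <= X]mulrAC ler_pdivlMr //.
have dnz : 0 <= z - n by rewrite subr_ge0.
have dny : 0 <= y - n by rewrite subr_ge0.
have dnx : 0 <= x - n by rewrite subr_ge0.
have dyx : 0 <= x - y by rewrite subr_ge0.
have dzx : 0 <= x - z by rewrite subr_ge0.
have h0 := mulr_ge0 (mulr_ge0 (ltW hy) (ltW hy)) dnz.
have h1 := mulr_ge0 (mulr_ge0 (ltW hy) (ltW hz)) dyx.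
have h2 := mulr_ge0 (mulr_ge0 (ltW hz) (ltW hz)) dny.
have h3 := mulr_ge0 (mulr_ge0 (ltW hz) (ltW hy)) dzx.
have h4 := mulr_ge0 (mulr_ge0 (mulr_ge0 hp (ltW hx)) (ltW hy)) dnz.
have h5 := mulr_ge0 (mulr_ge0 (mulr_ge0 hq (ltW hy)) (ltW hz)) dnx.
have h6 := mulr_ge0 (mulr_ge0 (mulr_ge0 hr (ltW hz)) (ltW hx)) dny.
lra.
Qed.

Lemma w_rng w : reduced_seq w -> forall j, (1 <= w j.+1 <= 3)%N.
Proof. by case=> h _ j; apply: h. Qed.

Lemma w_neq w : reduced_seq w -> forall j, (1 <= j)%N -> w j != w j.+1.
Proof. by case=> _ h j; apply: h. Qed.

Lemma kle_K l1 l2 l3 w j : kseq l1 l2 l3 w j <= Kq l1 l2 l3.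
Proof.
rewrite kdef; have [h1 [h2 h3]] := T_pos l1 l2 l3 w j; have hF := T_Fd l1 l2 l3 w j.
move: hF h1 h2 h3; set t := Tseq l1 l2 l3 w j => hF h1 h2 h3.
have a0 : t1 t != 0 by rewrite gt_eqF.
have b0 : t2 t != 0 by rewrite gt_eqF.
have c0 : t3 t != 0 by rewrite gt_eqF.
case: (w j) => [|[|[|a]]] /=.
- apply: (@bndK (t3 t) (t1 t) (t2 t) l2%:R l3%:R l1%:R) => //;
  solve [apply: (etrans _ hF); rewrite /Fd; ring | field; rewrite ?a0 ?b0 ?c0 //].
- apply: (@bndK (t1 t) (t2 t) (t3 t) l3%:R l1%:R l2%:R) => //;
  solve [apply: (etrans _ hF); rewrite /Fd; ring | field; rewrite ?a0 ?b0 ?c0 //].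
- apply: (@bndK (t2 t) (t3 t) (t1 t) l1%:R l2%:R l3%:R) => //;
  solve [apply: (etrans _ hF); rewrite /Fd; ring | field; rewrite ?a0 ?b0 ?c0 //].
- apply: (@bndK (t3 t) (t1 t) (t2 t) l2%:R l3%:R l1%:R) => //;
  solve [apply: (etrans _ hF); rewrite /Fd; ring | field; rewrite ?a0 ?b0 ?c0 //].
Qed.

Lemma k1_ge2 l1 l2 l3 w : reduced_seq w -> 2 <= kseq l1 l2 l3 w 1.
Proof.
move=> hw; rewrite kdef /=; have := @w_rng w hw 0.
have := ler0n rat l1; have := ler0n rat l2; have := ler0n rat l3.
case: (w 1) => [|[|[|[|a]]]] //= ? ? ? _;
rewrite /t1 /t2 /t3 /= !expr1n !mulr1 ?invr1 ?mulr1 ?divr1; lra.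
Qed.

Lemma k_mono l1 l2 l3 w : reduced_seq w -> forall j, kseq l1 l2 l3 w j <= kseq l1 l2 l3 w j.+1.
Proof.
move=> hw [|j].
  apply: le_trans (@k1_ge2 l1 l2 l3 w hw).
  by rewrite kdef /=; case: (w 0) => [|[|[|a]]] /=; rewrite /t1 /t2 /t3 /= ?mulr1 ?divr1 ?ler1n.
rewrite !kdef [Tseq _ _ _ _ j.+2]/=.
apply: mono_step; first exact: T_pos.
- exact: w_rng.
- exact: w_rng.
- exact: w_neq.
Qed.

Lemma k_le_mono l1 l2 l3 w : reduced_seq w -> forall m n, (m <= n)%N ->
  kseq l1 l2 l3 w m <= kseq l1 l2 l3 w n.
Proof.
move=> hw m n; elim: n => [|n IH]; first by rewrite leqn0 => /eqP ->.
rewrite leq_eqVlt => /orP [/eqP -> //|]; rewrite ltnS => /IH h.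
exact: le_trans h (@k_mono l1 l2 l3 w hw n).
Qed.

Lemma k_ge2 l1 l2 l3 w : reduced_seq w -> forall j, (1 <= j)%N -> 2 <= kseq l1 l2 l3 w j.
Proof. by move=> hw j hj; apply: le_trans (@k1_ge2 l1 l2 l3 w hw) (@k_le_mono _ _ _ _ hw _ _ hj). Qed.

Definition ge1 (t : triple) := 1 <= t1 t /\ 1 <= t2 t /\ 1 <= t3 t.

Lemma sel_ge1 t i : ge1 t -> 1 <= sel t i.
Proof. by case=> h1 [h2 h3]; case: i => [|[|[|i]]]. Qed.

Lemma oth_ge1 t i : ge1 t -> 1 <= oth t i.
Proof. by case=> h1 [h2 h3]; case: i => [|[|[|i]]] /=; rewrite mulr_ege1. Qed.

Lemma oth_ge_sel t a i : ge1 t -> (1 <= a <= 3)%N -> (1 <= i <= 3)%N -> a != i ->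
  sel t a <= oth t i.
Proof.
case=> h1 [h2 h3].
have p1 : 0 <= t1 t by apply: le_trans h1.
have p2 : 0 <= t2 t by apply: le_trans h2.
have p3 : 0 <= t3 t by apply: le_trans h3.
by case: a => [|[|[|[|a]]]] //; case: i => [|[|[|[|i]]]] //= _ _ _;
  rewrite ?ler_peMl ?ler_peMr.
Qed.

Lemma sel_mu_neq l1 l2 l3 t a i : (1 <= a <= 3)%N -> (1 <= i <= 3)%N -> a != i ->
  sel (mu l1 l2 l3 i t) a = sel t a.
Proof. by case: a => [|[|[|[|a]]]] //; case: i => [|[|[|[|i]]]]. Qed.

Lemma oth_mu l1 l2 l3 t i : (1 <= i <= 3)%N -> oth (mu l1 l2 l3 i t) i = oth t i.
Proof. by case: i => [|[|[|[|i]]]]. Qed.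

Lemma sel_eq l1 l2 l3 w j :
  sel (Tseq l1 l2 l3 w j) (w j) = kseq l1 l2 l3 w j * oth (Tseq l1 l2 l3 w j) (w j).
Proof. by rewrite kdef divfK // gt_eqF // oth_pos //; apply: T_pos. Qed.

Lemma ge1_intro t : (forall a, (1 <= a <= 3)%N -> 1 <= sel t a) -> ge1 t.
Proof. by move=> h; split; [apply: (h 1%N)|split; [apply: (h 2%N)|apply: (h 3%N)]]. Qed.

Lemma T_ge1 l1 l2 l3 w : reduced_seq w -> forall j, ge1 (Tseq l1 l2 l3 w j).
Proof.
move=> hw; elim=> [|j IH]; first by rewrite /ge1 /t1 /t2 /t3 /=.
apply: ge1_intro => a ha.
have hi := @w_rng w hw j.
case: (eqVneq a (w j.+1)) => [->|ne].
  rewrite sel_eq [Tseq _ _ _ _ j.+1]/= oth_mu //.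
  apply: mulr_ege1; last exact: oth_ge1.
  by apply: le_trans (@k_ge2 l1 l2 l3 w hw j.+1 isT); rewrite ler1n.
by rewrite /= sel_mu_neq //; apply: sel_ge1.
Qed.

Definition G l1 l2 l3 w j := sel (Tseq l1 l2 l3 w j) (w j).

Lemma G_max l1 l2 l3 w : reduced_seq w -> forall j a, (1 <= j)%N -> (1 <= a <= 3)%N -> a != w j ->
  sel (Tseq l1 l2 l3 w j) a <= G l1 l2 l3 w j.
Proof.
move=> hw [|j] a // _ ha ne.
rewrite /G sel_eq.
apply: le_trans (oth_ge_sel _ _ _ (@T_ge1 l1 l2 l3 w hw j.+1) ha (@w_rng w hw j) ne) _.
apply: ler_peMl; first by apply: le_trans (oth_ge1 _ _ (@T_ge1 _ _ _ _ hw _)).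
by apply: le_trans (@k_ge2 l1 l2 l3 w hw j.+1 isT); rewrite ler1n.
Qed.

Lemma k_ge1 l1 l2 l3 w : reduced_seq w -> forall j, (1 <= j)%N -> 1 <= kseq l1 l2 l3 w j.
Proof.
by move=> hw j hj; apply: le_trans (@k_ge2 l1 l2 l3 w hw j hj); rewrite ler1n.
Qed.

Lemma G_step l1 l2 l3 w : reduced_seq w -> forall j, (1 <= j)%N ->
  2 * G l1 l2 l3 w j <= G l1 l2 l3 w j.+1.
Proof.
move=> hw [|j] // _.
rewrite {2}/G sel_eq.
have hr := @w_rng w hw j; have hr' := @w_rng w hw j.+1.
have ne := @w_neq w hw j.+1 isT.
have o0 : 0 <= oth (Tseq l1 l2 l3 w j.+2) (w j.+2).
  by apply: le_trans (oth_ge1 _ _ (@T_ge1 _ _ _ _ hw _)).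
apply: le_trans (ler_wpM2r o0 (@k_ge2 l1 l2 l3 w hw j.+2 isT)).
rewrite ler_wpM2l //.
apply: le_trans (oth_ge_sel _ _ _ (@T_ge1 l1 l2 l3 w hw j.+2) hr hr' ne).
by rewrite /G [Tseq _ _ _ _ j.+2]/= sel_mu_neq.
Qed.

Lemma G_ge l1 l2 l3 w : reduced_seq w -> forall j, (1 <= j)%N -> j%:R <= G l1 l2 l3 w j.
Proof.
move=> hw; elim=> [|j IH] // _.
case: j IH => [|j] IH.
  by rewrite /G; apply: sel_ge1; apply: T_ge1.
have h1 := IH isT; have h2 := @G_step l1 l2 l3 w hw j.+1 isT.
have h3 : 1 <= (j.+1)%:R :> rat by rewrite ler1n.
rewrite -[in X in X <= _]addn1 natrD; lra.
Qed.

Lemma G_ge0 l1 l2 l3 w j : 0 <= G l1 l2 l3 w j.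
Proof. by apply: ltW; apply: sel_pos; apply: T_pos. Qed.

Lemma coord_step l1 l2 l3 w : reduced_seq w -> forall j a, (1 <= j)%N -> (1 <= a <= 3)%N ->
  sel (Tseq l1 l2 l3 w j) a <= sel (Tseq l1 l2 l3 w j.+1) a.
Proof.
move=> hw j a hj ha.
case: (eqVneq a (w j.+1)) => [e|ne]; last by rewrite /= sel_mu_neq //; apply: w_rng.
have ne : a != w j by rewrite e eq_sym; apply: w_neq.
apply: le_trans (@G_max l1 l2 l3 w hw j a hj ha ne) _.
have := @G_step l1 l2 l3 w hw j hj; have := @G_ge0 l1 l2 l3 w j.
rewrite {3}/G -e; lra.
Qed.

Lemma coord_mono l1 l2 l3 w : reduced_seq w -> forall j m a, (1 <= j)%N -> (j <= m)%N ->
  (1 <= a <= 3)%N -> sel (Tseq l1 l2 l3 w j) a <= sel (Tseq l1 l2 l3 w m) a.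
Proof.
move=> hw j m a hj; elim: m => [|m IH]; first by rewrite leqn0 => /eqP ->.
rewrite leq_eqVlt => /orP [/eqP -> //|]; rewrite ltnS => hjm ha.
apply: le_trans (IH hjm ha) _; apply: coord_step => //.
exact: leq_trans hjm.
Qed.

Lemma lim1_rat l1 l2 l3 w : reduced_seq w ->
  (forall i, (1 <= i <= 3)%N -> appears_infinitely w i) ->
  forall n : nat, (0 < n)%N -> exists J, forall m, (J <= m)%N ->
  Kq l1 l2 l3 - kseq l1 l2 l3 w m <= (2 + l1%:R + l2%:R + l3%:R) / n%:R.
Proof.
move=> hw hinf n hn.
have [j1 [hj1 e1]] := hinf 1%N isT n.
have [j2 [hj2 e2]] := hinf 2%N isT n.
have [j3 [hj3 e3]] := hinf 3%N isT n.
pose J := maxn j1 (maxn j2 j3).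
have hJ1 : (j1 <= J)%N by rewrite leq_maxl.
have hJ2 : (j2 <= J)%N by rewrite /J (leq_trans _ (leq_maxr _ _)) // leq_maxl.
have hJ3 : (j3 <= J)%N by rewrite /J (leq_trans _ (leq_maxr _ _)) // leq_maxr.
have hJ : (1 <= J)%N by apply: leq_trans hJ1; apply: leq_trans hj1.
have lb : forall a ja, (1 <= a <= 3)%N -> (n <= ja)%N -> (ja <= J)%N -> w ja = a ->
    n%:R <= sel (Tseq l1 l2 l3 w J) a.
  move=> a ja ha hnj hjJ ea.
  have hja : (1 <= ja)%N by apply: leq_trans hnj.
  apply: le_trans (@coord_mono l1 l2 l3 w hw ja J a hja hjJ ha).
  have := @G_ge l1 l2 l3 w hw ja hja; rewrite /G ea; apply: le_trans.
  by rewrite ler_nat.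
have b1 := lb 1%N j1 isT hj1 hJ1 e1.
have b2 := lb 2%N j2 isT hj2 hJ2 e2.
have b3 := lb 3%N j3 isT hj3 hJ3 e3.
have hmax : forall a, (1 <= a <= 3)%N -> sel (Tseq l1 l2 l3 w J) a <= sel (Tseq l1 l2 l3 w J) (w J).
  move=> a ha; case: (eqVneq a (w J)) => [->//|ne]; exact: G_max.
have hrJ : (1 <= w J <= 3)%N by case: J hJ {hJ1 hJ2 hJ3 lb b1 b2 b3 hmax} => // J' _; apply: w_rng.
exists J => m hm.
have hkm := @k_le_mono l1 l2 l3 w hw J m hm.
suff : Kq l1 l2 l3 - kseq l1 l2 l3 w J <= (2 + l1%:R + l2%:R + l3%:R) / n%:R by lra.
have m1 := hmax 1%N isT; have m2 := hmax 2%N isT; have m3 := hmax 3%N isT.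
have hF := T_Fd l1 l2 l3 w J.
have n0 : 0 < n%:R :> rat by rewrite ltr0n.
have [p1 [p2 p3]] := T_pos l1 l2 l3 w J.
have a0 : t1 (Tseq l1 l2 l3 w J) != 0 by rewrite gt_eqF.
have a1 : t2 (Tseq l1 l2 l3 w J) != 0 by rewrite gt_eqF.
have a2 : t3 (Tseq l1 l2 l3 w J) != 0 by rewrite gt_eqF.
move: m1 m2 m3 b1 b2 b3 hF a0 a1 a2; rewrite kdef.
set t := Tseq l1 l2 l3 w J.
case: (w J) hrJ => [|[|[|[|a]]]] //= _ m1 m2 m3 b1 b2 b3 hF a0 a1 a2.
- rewrite (_ : 2 + l1%:R + l2%:R + l3%:R = 2 + l3%:R + l1%:R + l2%:R :> rat); last by ring.
  apply: (@bndL (t1 t) (t2 t) (t3 t) l3%:R l1%:R l2%:R) => //;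
  solve [apply: (etrans _ hF); rewrite /Fd; ring | field; rewrite ?a0 ?a1 ?a2 //].
- rewrite (_ : 2 + l1%:R + l2%:R + l3%:R = 2 + l1%:R + l2%:R + l3%:R :> rat); last by ring.
  apply: (@bndL (t2 t) (t3 t) (t1 t) l1%:R l2%:R l3%:R) => //;
  solve [apply: (etrans _ hF); rewrite /Fd; ring | field; rewrite ?a0 ?a1 ?a2 //].
- rewrite (_ : 2 + l1%:R + l2%:R + l3%:R = 2 + l2%:R + l3%:R + l1%:R :> rat); last by ring.
  apply: (@bndL (t3 t) (t1 t) (t2 t) l2%:R l3%:R l1%:R) => //;
  solve [apply: (etrans _ hF); rewrite /Fd; ring | field; rewrite ?a0 ?a1 ?a2 //].
Qed.

Theorem theorem6p6 (R : realType) (l1 l2 l3 : nat) (w : nat -> nat) :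
  reduced_seq w ->
  ((forall i, (1 <= i <= 3)%N -> appears_infinitely w i) ->
     (fun j => ratr (kseq l1 l2 l3 w j) : R) @ \oo
       --> ((3 + l1 + l2 + l3)%N%:R : R)) /\
  ((exists i, (1 <= i <= 3)%N /\ ~ appears_infinitely w i) ->
     exists kb : R, (fun j => ratr (kseq l1 l2 l3 w j) : R) @ \oo --> kb).
Proof.
move=> hw.
have eK : ((3 + l1 + l2 + l3)%N%:R : R) = ratr (Kq l1 l2 l3) by rewrite ratr_nat.
split.
  move=> hinf; apply/cvgrPdist_le => e e0.
  set C : rat := 2 + l1%:R + l2%:R + l3%:R.
  have C0 : 0 < C by rewrite /C; have := ler0n rat l1; have := ler0n rat l2; have := ler0n rat l3; lra.
  have rC0 : (0 : R) < ratr C by rewrite ltr0q.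
  pose n := (Num.bound (ratr C / e)).+1.
  have hn : ratr C / e < n%:R.
    apply: lt_le_trans (archi_boundP _) _; first by rewrite divr_ge0 // ltW.
    by rewrite ler_nat.
  have [J hJ] := @lim1_rat l1 l2 l3 w hw hinf n isT.
  near=> m.
  have Jm : (J <= m)%N by near: m; exact: nbhs_infty_ge.
  have h1 := hJ m Jm.
  have h2 := kle_K l1 l2 l3 w m.
  rewrite eK -rmorphB -ratr_norm ger0_norm ?subr_ge0 //.
  apply: le_trans (_ : ratr (C / n%:R) <= e).
    by rewrite ler_rat.
  rewrite fmorph_div rmorph_nat ler_pdivrMr ?ltr0n //.
  by move: hn; rewrite ltr_pdivrMr // => /ltW; rewrite mulrC.
move=> _; eexists; apply: nondecreasing_cvgn.
  by move=> m k hmk; rewrite ler_rat; apply: k_le_mono.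
exists (ratr (Kq l1 l2 l3)) => _ [j _ <-].
by rewrite ler_rat; apply: kle_K.
Unshelve. all: by end_near.
Qed.
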